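(* Let $\alpha(x)=a_1x^2+a_2x+a_3$ and $\beta(x)=b_1x^2+b_2x+b_3$ with $a_i,b_i\in\mathbb{R}$, $x\in\mathbb{R}$. Then the set $$V:=\{(\alpha(x),\beta(x)) : x\in\mathbb{R}\}+\mathbb{R}^2_+$$ is convex. *)

(* Defs.v *)
From Stdlib Require Import Reals.
Open Scope R_scope.

Definition convex2 (S : R * R -> Prop) : Prop :=
  forall (u v : R * R) (t : R), S u -> S v -> 0 <= t <= 1 ->
    S (t * fst u + (1 - t) * fst v, t * snd u + (1 - t) * snd v).

Definition plus_orthant (A : R * R -> Prop) : R * R -> Prop :=
  fun p => exists a d : R * R, A a /\ 0 <= fst d /\ 0 <= snd d /\
             p = (fst a + fst d, snd a + snd d).

(* Main.v *)
Require Import Defs.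
From Stdlib Require Import Reals Lra Psatz.
Open Scope R_scope.

Lemma root_case (a1 a2 a3 b1 b2 b3 x y t : R) :
  a1 > 0 -> 0 <= t <= 1 ->
  exists z, a1*z^2+a2*z+a3 <= t*(a1*x^2+a2*x+a3) + (1-t)*(a1*y^2+a2*y+a3)
         /\ b1*z^2+b2*z+b3 <= t*(b1*x^2+b2*x+b3) + (1-t)*(b1*y^2+b2*y+b3).
Proof.
  intros Ha Ht.
  set (M1 := t*(a1*x^2+a2*x+a3) + (1-t)*(a1*y^2+a2*y+a3)).
  set (M2 := t*(b1*x^2+b2*x+b3) + (1-t)*(b1*y^2+b2*y+b3)).
  set (w := t*x+(1-t)*y).
  assert (Hw : M1 - (a1*w^2+a2*w+a3) = a1*(t*(1-t)*(x-y)^2)) by (unfold M1, w; ring).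
  assert (Hw0 : 0 <= a1*(t*(1-t)*(x-y)^2)).
  { apply Rmult_le_pos; [lra|]. apply Rmult_le_pos; [nra|]. apply pow2_ge_0. }
  assert (Hw4 : 0 <= 4*a1*(M1 - (a1*w^2+a2*w+a3))).
  { apply Rmult_le_pos; [lra|]. rewrite Hw. exact Hw0. }
  set (D := a2^2 - 4*a1*(a3 - M1)).
  assert (HD : D = (2*a1*w+a2)^2 + 4*a1*(M1 - (a1*w^2+a2*w+a3))) by (unfold D; ring).
  assert (HD0 : 0 <= D).
  { rewrite HD. assert (0 <= (2*a1*w+a2)^2) by apply pow2_ge_0. lra. }
  set (S := sqrt D).
  assert (HS2 : S*S = D) by (apply sqrt_sqrt; lra).
  assert (HS0 : 0 <= S) by apply sqrt_pos.
  assert (HSge : (2*a1*w+a2)^2 <= S*S).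
  { rewrite HS2, HD. lra. }
  assert (HSa : 2*a1*w+a2 <= S) by nra.
  assert (HSb : -(2*a1*w+a2) <= S) by nra.
  set (c := a1*b2 - b1*a2).
  assert (Hid : forall z, a1*(b1*z^2+b2*z+b3) - b1*(a1*z^2+a2*z+a3) = c*z + (a1*b3 - b1*a3))
    by (intros; unfold c; ring).
  assert (HidM : a1*M2 - b1*M1 = c*w + (a1*b3 - b1*a3)) by (unfold M1, M2, c, w; ring).
  assert (Hal : forall z, 4*a1*(a1*z^2+a2*z+a3) = (2*a1*z+a2)^2 - a2^2 + 4*a1*a3)
    by (intros; ring).
  destruct (Rle_or_lt 0 c) as [Hc|Hc].
  - set (z := (-a2 - S)/(2*a1)).
    assert (Hz : 2*a1*z+a2 = -S) by (unfold z; field; lra).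
    assert (Hαz : a1*z^2+a2*z+a3 = M1).
    { apply (Rmult_eq_reg_l (4*a1)); [|lra]. rewrite Hal, Hz.
      unfold D in HS2. nra. }
    exists z. split; [lra|].
    assert (Hzw : z <= w) by nra.
    assert (H1 := Hid z).
    assert (a1 * (M2 - (b1*z^2+b2*z+b3)) >= 0) by nra.
    nra.
  - set (z := (-a2 + S)/(2*a1)).
    assert (Hz : 2*a1*z+a2 = S) by (unfold z; field; lra).
    assert (Hαz : a1*z^2+a2*z+a3 = M1).
    { apply (Rmult_eq_reg_l (4*a1)); [|lra]. rewrite Hal, Hz.
      unfold D in HS2. nra. }
    exists z. split; [lra|].
    assert (Hzw : w <= z) by nra.
    assert (H1 := Hid z).
    assert (a1 * (M2 - (b1*z^2+b2*z+b3)) >= 0) by nra.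
    nra.
Qed.

Lemma div_nonneg (a b : R) : 0 <= a -> 0 < b -> 0 <= a / b.
Proof. intros. unfold Rdiv. apply Rmult_le_pos; [lra|]. left; apply Rinv_0_lt_compat; lra. Qed.

Lemma eventually_le (c1 c2 c3 M : R) :
  c1 <= 0 -> (c1 < 0 \/ c2 < 0 \/ (c2 = 0 /\ c3 <= M)) ->
  exists Z, forall z, Z <= z -> c1*z^2+c2*z+c3 <= M.
Proof.
  intros H1 [H|[H|[H H']]].
  - exists (1 + (Rabs c2 + Rabs (M - c3))/(-c1)). intros z Hz.
    assert (Hq : 0 <= (Rabs c2 + Rabs (M - c3))/(-c1)).
    { apply div_nonneg; [|lra]. pose proof (Rabs_pos c2); pose proof (Rabs_pos (M-c3)); lra. }
    assert (Hz1 : 1 <= z) by lra.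
    assert (Hk : c1 * z <= -(Rabs c2 + Rabs (M - c3))).
    { assert (c1 * ((Rabs c2 + Rabs (M - c3))/(-c1)) = -(Rabs c2 + Rabs (M - c3))) by (field; lra).
      nra. }
    assert (c2 * z <= Rabs c2 * z) by (apply Rmult_le_compat_r; [lra| apply Rle_abs]).
    assert (z * (c1*z + Rabs c2) <= -(Rabs (M-c3))) by (pose proof (Rabs_pos (M-c3)); nra).
    pose proof (Rle_abs (c3 - M)). rewrite Rabs_minus_sym in H2.
    nra.
  - exists (1 + Rabs (M - c3)/(-c2)). intros z Hz.
    assert (Hq : 0 <= Rabs (M - c3)/(-c2)).
    { apply div_nonneg; [apply Rabs_pos|lra]. }
    assert (Hk : c2 * z <= -(Rabs (M - c3))).
    { assert (c2 * (Rabs (M - c3)/(-c2)) = -(Rabs (M - c3))) by (field; lra).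
      nra. }
    assert (c1 * z^2 <= 0) by (assert (0 <= z^2) by apply pow2_ge_0; nra).
    pose proof (Rle_abs (c3 - M)). rewrite Rabs_minus_sym in H2.
    lra.
  - exists 0. intros z _. subst c2.
    assert (c1 * z^2 <= 0) by (assert (0 <= z^2) by apply pow2_ge_0; nra). lra.
Qed.

Lemma dir_case (a1 a2 a3 b1 b2 b3 M1 M2 s : R) :
  s = 1 \/ s = -1 ->
  a1 <= 0 -> (a1 < 0 \/ s*a2 < 0 \/ (s*a2 = 0 /\ a3 <= M1)) ->
  b1 <= 0 -> (b1 < 0 \/ s*b2 < 0 \/ (s*b2 = 0 /\ b3 <= M2)) ->
  exists z, a1*z^2+a2*z+a3 <= M1 /\ b1*z^2+b2*z+b3 <= M2.
Proof.
  intros Hs Ha Ha' Hb Hb'.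
  destruct (eventually_le a1 (s*a2) a3 M1 Ha Ha') as [Z1 HZ1].
  destruct (eventually_le b1 (s*b2) b3 M2 Hb Hb') as [Z2 HZ2].
  exists (s * Rmax Z1 Z2).
  assert (E1 := HZ1 (Rmax Z1 Z2) (Rmax_l _ _)).
  assert (E2 := HZ2 (Rmax Z1 Z2) (Rmax_r _ _)).
  destruct Hs; subst s; split; [lra|lra| |]; ring_simplify; ring_simplify in E1; ring_simplify in E2; lra.
Qed.

Lemma key (a1 a2 a3 b1 b2 b3 x y t : R) :
  0 <= t <= 1 ->
  exists z, a1*z^2+a2*z+a3 <= t*(a1*x^2+a2*x+a3) + (1-t)*(a1*y^2+a2*y+a3)
         /\ b1*z^2+b2*z+b3 <= t*(b1*x^2+b2*x+b3) + (1-t)*(b1*y^2+b2*y+b3).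
Proof.
  intros Ht.
  destruct (Rlt_or_le 0 a1) as [Ha|Ha].
  { apply root_case; assumption. }
  destruct (Rlt_or_le 0 b1) as [Hb|Hb].
  { destruct (root_case b1 b2 b3 a1 a2 a3 x y t Hb Ht) as [z [H1 H2]].
    exists z; split; assumption. }
  destruct (Req_dec a1 0) as [Ha0|Ha0]; destruct (Req_dec b1 0) as [Hb0|Hb0].
  - subst. exists (t*x+(1-t)*y). split; right; ring.
  -
    subst a1.
    destruct (Rlt_or_le 0 a2) as [H2|H2].
    + apply (dir_case 0 a2 a3 b1 b2 b3 _ _ (-1)); try lra.
    + destruct (Req_dec a2 0) as [H3|H3].
      * subst a2. apply (dir_case 0 0 a3 b1 b2 b3 _ _ 1); try lra;
        try (right; right; split; [lra| right; ring]).
      * apply (dir_case 0 a2 a3 b1 b2 b3 _ _ 1); try lra.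
  - subst b1.
    destruct (Rlt_or_le 0 b2) as [H2|H2].
    + apply (dir_case a1 a2 a3 0 b2 b3 _ _ (-1)); try lra.
    + destruct (Req_dec b2 0) as [H3|H3].
      * subst b2. apply (dir_case a1 a2 a3 0 0 b3 _ _ 1); try lra;
        try (right; right; split; [lra| right; ring]).
      * apply (dir_case a1 a2 a3 0 b2 b3 _ _ 1); try lra.
  - apply (dir_case a1 a2 a3 b1 b2 b3 _ _ 1); lra.
Qed.

Theorem proposition4p2 (a1 a2 a3 b1 b2 b3 : R) :
  let alpha := fun x : R => a1 * x ^ 2 + a2 * x + a3 in
  let beta := fun x : R => b1 * x ^ 2 + b2 * x + b3 in
  convex2 (plus_orthant (fun p : R * R => exists x : R, p = (alpha x, beta x))).
Proof.
  intros alpha beta u v t [a [d [[x Hx] [Hd1 [Hd2 Hu]]]]] [b [e [[y Hy] [He1 [He2 Hv]]]]] Ht.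
  subst u v a b. simpl in *.
  destruct (key a1 a2 a3 b1 b2 b3 x y t Ht) as [z [Hz1 Hz2]].
  exists (alpha z, beta z).
  exists (t * (alpha x + fst d) + (1 - t) * (alpha y + fst e) - alpha z,
          t * (beta x + snd d) + (1 - t) * (beta y + snd e) - beta z).
  subst alpha beta; simpl.
  split; [exists z; reflexivity|].
  split; [nra|]. split; [nra|].
  f_equal; ring.
Qed.
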